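(* Let $\mathcal{B}$ be a bicategory and let $\mathcal{N}\mathcal{B}\colon(\Theta^2)^{\mathrm{op}}\to\mathbf{Set}$ be its nerve. Then $\mathcal{N}\mathcal{B}$ satisfies the Segal condition, so it is a Tamsamani–Simpson weak $2$-category: (i) for every $k\ge0$ the Segal map $S_k\colon\mathcal{N}\mathcal{B}(k,-)\to\mathcal{N}\mathcal{B}(1,-)\times_{\mathcal{N}\mathcal{B}(0,0)}\cdots\times_{\mathcal{N}\mathcal{B}(0,0)}\mathcal{N}\mathcal{B}(1,-)$ ($k$ factors) is contractible; and (ii) for all $j,k\ge0$ the Segal map $S_{j,k}\colon\mathcal{N}\mathcal{B}(j,k)\to\mathcal{N}\mathcal{B}(j,1)\times_{\mathcal{N}\mathcal{B}(j,0)}\cdots\times_{\mathcal{N}\mathcal{B}(j,0)}\mathcal{N}\mathcal{B}(j,1)$ ($k$ factors) is a bijection.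
   Context: $\Delta$ is the category of finite ordinals $[k]=\{0,\dots,k\}$ and order-preserving maps. $\Theta^2$ is the quotient of $\Delta\times\Delta$ obtained by identifying all objects $([0],[k])$, $k\ge0$, into one object (represented by $(0,0)$) and identifying morphisms $(\phi,\psi)$ and $(\phi,\psi')$ whenever $\phi$ factors through $[0]$; write objects as $(j,k)$. Let $\sigma,\tau\colon[0]\to[1]$ pick $0$ and $1$, and $\iota_i\colon[1]\to[k]$ ($1\le i\le k$) send $0\mapsto i-1$, $1\mapsto i$. Nerve of a bicategory $\mathcal{B}$ (composition $\circ$ of $1$-cells, horizontal $*$ and vertical $\cdot$ composition of $2$-cells, associator $s$, left/right unitors $l,r$): $\mathcal{N}\mathcal{B}(j,k)$ is the set of quadruples $\big((a_u)_{0\le u\le j},(f^z_{uv})_{0\le u<v\le j,\,0\le z\le k},(\alpha^z_{uv})_{0\le u<v\le j,\,1\le z\le k},(\iota^z_{uvw})_{0\le u<v<w\le j,\,0\le z\le k}\big)$ with $a_u$ objects, $f^z_{uv}\colon a_u\to a_v$ $1$-cells, $\alpha^z_{uv}\colon f^{z-1}_{uv}\Rightarrow f^z_{uv}$ $2$-cells, $\iota^z_{uvw}\colon f^z_{vw}\circ f^z_{uv}\Rightarrow f^z_{uw}$ invertible $2$-cells, satisfying (A1) $\iota^z_{uvw}\cdot(\alpha^z_{vw}*\alpha^z_{uv})=\alpha^z_{uw}\cdot\iota^{z-1}_{uvw}$ and (A2) $\iota^z_{uwx}\cdot(1*\iota^z_{uvw})\cdot s=\iota^z_{uvx}\cdot(\iota^z_{vwx}*1)$,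 with $s\colon(f^z_{wx}\circ f^z_{vw})\circ f^z_{uv}\Rightarrow f^z_{wx}\circ(f^z_{vw}\circ f^z_{uv})$ the associator. (For $j=0$ this is just an object $a_0$, consistent with the identification in $\Theta^2$.) For $(p,q)\colon(l,m)\to(j,k)$, $\mathcal{N}\mathcal{B}(p,q)$ sends such a quadruple to $\big((b_u),(g^z_{uv}),(\beta^z_{uv}),(\kappa^z_{uvw})\big)$ with $b_u=a_{p(u)}$; $g^z_{uv}=f^{q(z)}_{p(u)p(v)}$ if $p(u)\ne p(v)$ and $1_{a_{p(u)}}$ otherwise; $\beta^z_{uv}$ the vertical composite $\alpha^{q(z)}_{p(u)p(v)}\cdot\ldots\cdot\alpha^{q(z-1)+1}_{p(u)p(v)}$ if $p(u)\ne p(v)$ (an identity if $q(z-1)=q(z)$), and $1_{1_{a_{p(u)}}}$ if $p(u)=p(v)$; $\kappa^z_{uvw}$ equal to $\iota^{q(z)}_{p(u)p(v)p(w)}$ if $p(u),p(v),p(w)$ are distinct, to the unitor $1\circ g^z_{uv}\Rightarrow g^z_{uv}$ if $p(u)\ne p(v)=p(w)$, to the unitor $g^z_{vw}\circ1\Rightarrow g^z_{vw}$ if $p(u)=p(v)\ne p(w)$, and to $1_{1_{a_{p(u)}}}$ (modulo the unitor $1\circ1\cong1$) if all equal. Segal maps: for a presheaf $A$ on $\Theta^2$, $A(k,-)$ is a simplicial set (functor $\Delta^{\mathrm{op}}\to\mathbf{Set}$) and $A(0,-)$ is constant at $A(0,0)$. $S_k$ is the map of simplicial sets into the wide pullback of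 $k$ copies of $A(1,-)$ along $t=A(\tau,\mathrm{id})$ and $s=A(\sigma,\mathrm{id})$, with components $A(\iota_i,\mathrm{id})$. $S_{j,k}$ is the map into the wide pullback of $k$ copies of $A(j,1)$ along $t=A(\mathrm{id},\tau)$ and $s=A(\mathrm{id},\sigma)$ over $A(j,0)$, with components $A(\mathrm{id},\iota_i)$. A map $\alpha\colon A\to B$ of simplicial sets, with source/target maps $s=A(\sigma),t=A(\tau)\colon A_1\to A_0$, is contractible if $\alpha_0\colon A_0\to B_0$ is surjective and the induced map $A_1\to A_0\times_{B_0}B_1\times_{B_0}A_0$, $x\mapsto(s x,\alpha_1x,t x)$, is a bijection (i.e. $\alpha$ is surjective on $0$-cells and full and faithful on $1$-cells). A Tamsamani–Simpson weak $2$-category is a presheaf on $\Theta^2$ satisfying (i) and (ii) (the Segal condition). *)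

(* Defs.v *)
From mathcomp Require Import ssreflect ssrfun ssrbool eqtype ssrnat seq fintype.

Set Implicit Arguments.
Unset Strict Implicit.
Unset Printing Implicit Defensive.

(* Bicategories (2-cells form sets; equality of 2-cells is Leibniz equality) *)

Record bicat_data := BicatData {
  Obj : Type;
  hom : Obj -> Obj -> Type;
  cell : forall a b : Obj, hom a b -> hom a b -> Type;
  id1 : forall a : Obj, hom a a;
  comp1 : forall a b c : Obj, hom b c -> hom a b -> hom a c;
  id2 : forall (a b : Obj) (f : hom a b), cell f f;
  vcomp : forall (a b : Obj) (f g h : hom a b),
      cell g h -> cell f g -> cell f h;
  hcomp : forall (a b c : Obj) (f f' : hom a b) (g g' : hom b c),
      cell g g' -> cell f f' -> cell (comp1 g f) (comp1 g' f');
  assoc : forall (a b c d : Obj) (f : hom a b) (g : hom b c) (h : hom c d),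
      cell (comp1 (comp1 h g) f) (comp1 h (comp1 g f));
  lunit : forall (a b : Obj) (f : hom a b), cell (comp1 (id1 b) f) f;
  runit : forall (a b : Obj) (f : hom a b), cell (comp1 f (id1 a)) f
}.

Arguments hom {_}.
Arguments cell {_ a b}.
Arguments id1 {_}.
Arguments comp1 {_ a b c}.
Arguments id2 {_ a b}.
Arguments vcomp {_ a b f g h}.
Arguments hcomp {_ a b c f f' g g'}.
Arguments assoc {_ a b c d}.
Arguments lunit {_ a b}.
Arguments runit {_ a b}.

Definition invertible2 (B : bicat_data) (a b : Obj B) (f g : hom a b)
  (al : cell f g) : Prop :=
  exists be : cell g f, vcomp be al = id2 f /\ vcomp al be = id2 g.

Definition bicat_axioms (B : bicat_data) : Prop :=
  (forall (a b : Obj B) (f g h i : hom a b)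
          (al : cell f g) (be : cell g h) (ga : cell h i),
      vcomp ga (vcomp be al) = vcomp (vcomp ga be) al) /\
  (forall (a b : Obj B) (f g : hom a b) (al : cell f g),
      vcomp (id2 g) al = al /\ vcomp al (id2 f) = al) /\
  (forall (a b c : Obj B) (f : hom a b) (g : hom b c),
      hcomp (id2 g) (id2 f) = id2 (comp1 g f)) /\
  (forall (a b c : Obj B) (f f' f'' : hom a b) (g g' g'' : hom b c)
          (al : cell f f') (al' : cell f' f'') (be : cell g g') (be' : cell g' g''),
      hcomp (vcomp be' be) (vcomp al' al) = vcomp (hcomp be' al') (hcomp be al)) /\
  (forall (a b c d : Obj B) (f : hom a b) (g : hom b c) (h : hom c d),
      invertible2 (assoc f g h)) /\
  (forall (a b : Obj B) (f : hom a b), invertible2 (lunit f)) /\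
  (forall (a b : Obj B) (f : hom a b), invertible2 (runit f)) /\
  (forall (a b c d : Obj B) (f f' : hom a b) (g g' : hom b c) (h h' : hom c d)
          (al : cell f f') (be : cell g g') (ga : cell h h'),
      vcomp (assoc f' g' h') (hcomp (hcomp ga be) al)
      = vcomp (hcomp ga (hcomp be al)) (assoc f g h)) /\
  (forall (a b : Obj B) (f f' : hom a b) (al : cell f f'),
      vcomp (lunit f') (hcomp (id2 (id1 b)) al) = vcomp al (lunit f)) /\
  (forall (a b : Obj B) (f f' : hom a b) (al : cell f f'),
      vcomp (runit f') (hcomp al (id2 (id1 a))) = vcomp al (runit f)) /\
  (forall (a b c d e : Obj B) (f : hom a b) (g : hom b c) (h : hom c d) (k : hom d e),
      vcomp (assoc (comp1 g f) h k) (assoc f g (comp1 k h))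
      = vcomp (hcomp (id2 k) (assoc f g h))
          (vcomp (assoc f (comp1 h g) k) (hcomp (assoc g h k) (id2 f)))) /\
  (forall (a b c : Obj B) (f : hom a b) (g : hom b c),
      vcomp (hcomp (id2 g) (lunit f)) (assoc f (id1 b) g)
      = hcomp (runit g) (id2 f)).

Record bicategory := Bicategory {
  bicat_of :> bicat_data;
  bicat_ax : bicat_axioms bicat_of
}.

(* For z : 'I_k (standing for the index z+1 in {1..k}):
   zprev z = z (i.e. (z+1)-1) and znext z = z+1, both in 'I_k.+1 = [k]. *)
Definition zprev (k : nat) (z : 'I_k) : 'I_k.+1 := widen_ord (leqnSn k) z.
Definition znext (k : nat) (z : 'I_k) : 'I_k.+1 := lift ord0 z.

(* Raw quadruples ((a_u),(f^z_uv),(alpha^z_uv),(iota^z_uvw)) for (j,k).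
   The order conditions u<v (<w) are carried as (boolean, hence
   proof-irrelevant) hypotheses. *)
Record nerve_raw (B : bicat_data) (j k : nat) := NerveRaw {
  nob : 'I_j.+1 -> Obj B;
  n1 : forall (u v : 'I_j.+1), u < v -> 'I_k.+1 -> hom (nob u) (nob v);
  n2 : forall (u v : 'I_j.+1) (huv : u < v) (z : 'I_k),
      cell (n1 huv (zprev z)) (n1 huv (znext z));
  n3 : forall (u v w : 'I_j.+1) (huv : u < v) (hvw : v < w) (huw : u < w)
              (z : 'I_k.+1),
      cell (comp1 (n1 hvw z) (n1 huv z)) (n1 huw z)
}.

Arguments nob {B j k}.
Arguments n1 {B j k} _ {u v}.
Arguments n2 {B j k} _ {u v}.
Arguments n3 {B j k} _ {u v w}.

(* Membership in NB(j,k): invertibility of the iota's, (A1) and (A2). *)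
Definition is_nerve (B : bicat_data) (j k : nat) (x : nerve_raw B j k) : Prop :=
  (forall (u v w : 'I_j.+1) (huv : u < v) (hvw : v < w) (huw : u < w) (z : 'I_k.+1),
      invertible2 (n3 x huv hvw huw z)) /\
  (forall (u v w : 'I_j.+1) (huv : u < v) (hvw : v < w) (huw : u < w) (z : 'I_k),
      vcomp (n3 x huv hvw huw (znext z)) (hcomp (n2 x hvw z) (n2 x huv z))
      = vcomp (n2 x huw z) (n3 x huv hvw huw (zprev z))) /\
  (forall (u v w y : 'I_j.+1) (huv : u < v) (hvw : v < w) (hwy : w < y)
          (huw : u < w) (hvy : v < y) (huy : u < y) (z : 'I_k.+1),
      vcomp (n3 x huw hwy huy z)
            (vcomp (hcomp (id2 (n1 x hwy z)) (n3 x huv hvw huw z))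
                   (assoc (n1 x huv z) (n1 x hvw z) (n1 x hwy z)))
      = vcomp (n3 x huv hvy huy z)
              (hcomp (n3 x hvw hwy hvy z) (id2 (n1 x huv z)))).

(* --- NB(id, q) for q : [0] -> [k] picking the vertex c --- *)
Definition nerve_pt (B : bicat_data) (j k : nat) (c : 'I_k.+1)
  (x : nerve_raw B j k) : nerve_raw B j 0 :=
  @NerveRaw B j 0 (nob x)
    (fun u v huv _ => n1 x huv c)
    (fun u v huv (z : 'I_0) => match z with Ordinal n hn =>
        False_rect _ (notF (hn : n < 0)) end)
    (fun u v w huv hvw huw _ => n3 x huv hvw huw c).

(* iota_i : [1] -> [k], 0 |-> i-1, 1 |-> i   (i : 'I_k stands for i+1) *)
Definition iota_map (k : nat) (i : 'I_k) (z : 'I_2) : 'I_k.+1 :=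
  match nat_of_ord z with 0 => zprev i | _ => znext i end.

(* --- NB(id, iota_i) : NB(j,k) -> NB(j,1) --- *)
Definition nerve_edge (B : bicat_data) (j k : nat) (i : 'I_k)
  (x : nerve_raw B j k) : nerve_raw B j 1 :=
  @NerveRaw B j 1 (nob x)
    (fun u v huv z => n1 x huv (iota_map i z))
    (fun u v huv (z : 'I_1) =>
       match z as z0 return cell (n1 x huv (iota_map i (zprev z0)))
                                 (n1 x huv (iota_map i (znext z0))) with
       | Ordinal n hn =>
         match n as n0 return forall hn0 : n0 < 1,
             cell (n1 x huv (iota_map i (zprev (Ordinal hn0))))
                  (n1 x huv (iota_map i (znext (Ordinal hn0)))) with
         | 0 => fun _ => n2 x huv i
         | n'.+1 => fun hn0 => False_rect _ (notF (hn0 : n'.+1 < 1))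
         end hn
       end)
    (fun u v w huv hvw huw z => n3 x huv hvw huw (iota_map i z)).

Lemma iota_map_mono (k : nat) (i : 'I_k) (u v : 'I_2) :
  u < v -> iota_map i u < iota_map i v.
Proof.
by case: u v => [[|[|u]] hu] [[|[|v]] hv].
Qed.

Lemma no_triple2 (u v w : 'I_2) : u < v -> v < w -> False.
Proof. by case: u v w => [[|[|u]] ?] [[|[|v]] ?] [[|[|w]] ?]. Qed.

(* --- NB(iota_i, id) : NB(k,m) -> NB(1,m) --- *)
Definition nerve_face (B : bicat_data) (k m : nat) (i : 'I_k)
  (x : nerve_raw B k m) : nerve_raw B 1 m :=
  @NerveRaw B 1 m (fun u => nob x (iota_map i u))
    (fun u v huv z => n1 x (iota_map_mono i huv) z)
    (fun u v huv z => n2 x (iota_map_mono i huv) z)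
    (fun u v w huv hvw huw z => False_rect _ (no_triple2 huv hvw)).

(* An element is a chain of k composable edges; its k+1 vertices are        *)
(* recorded too, so that for k = 0 the pullback is V itself.                 *)

Record chain (V E : Type) (k : nat) := Chain {
  cvert : 'I_k.+1 -> V;
  cedge : 'I_k -> E
}.

Arguments cvert {V E k}.
Arguments cedge {V E k}.

Definition in_pullback (V E : Type) (k : nat) (NV : V -> Prop) (NE : E -> Prop)
  (s t : E -> V) (c : chain V E k) : Prop :=
  (forall v, NV (cvert c v)) /\
  (forall i : 'I_k, NE (cedge c i) /\ s (cedge c i) = cvert c (zprev i)
                    /\ t (cedge c i) = cvert c (znext i)).

Definition bijective_on (A B : Type) (NA : A -> Prop) (NB : B -> Prop)
  (f : A -> B) : Prop :=
  (forall x, NA x -> NB (f x)) /\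
  (forall y, NB y -> exists! x, NA x /\ f x = y).

(* A map alpha : A -> B of simplicial sets (only degrees 0,1 matter) is
   contractible: surjective on 0-cells, and A_1 -> A_0 x_{B_0} B_1 x_{B_0} A_0,
   x |-> (s x, alpha_1 x, t x) is a bijection. *)
Definition contractible (A0 A1 B0 B1 : Type)
  (NA0 : A0 -> Prop) (NA1 : A1 -> Prop) (NB0 : B0 -> Prop) (NB1 : B1 -> Prop)
  (sA tA : A1 -> A0) (sB tB : B1 -> B0) (al0 : A0 -> B0) (al1 : A1 -> B1) : Prop :=
  (forall x, NA0 x -> NB0 (al0 x)) /\
  (forall x, NA1 x -> NB1 (al1 x)) /\
  (forall y, NB0 y -> exists2 x, NA0 x & al0 x = y) /\
  (forall (x x' : A0) (y : B1), NA0 x -> NA0 x' -> NB1 y ->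
      al0 x = sB y -> al0 x' = tB y ->
      exists! x1 : A1, NA1 x1 /\ sA x1 = x /\ al1 x1 = y /\ tA x1 = x').

(* NB(0,0) is the set of objects; A(sigma,id), A(tau,id) : NB(1,m) -> NB(0,0) *)
Definition src_obj (B : bicat_data) (m : nat) (y : nerve_raw B 1 m) : Obj B :=
  nob y ord0.
Definition tgt_obj (B : bicat_data) (m : nat) (y : nerve_raw B 1 m) : Obj B :=
  nob y ord_max.

(* S_k in simplicial degree m : NB(k,m) -> NB(1,m) x_{NB(0,0)} ... *)
Definition segal1 (B : bicat_data) (k m : nat) (x : nerve_raw B k m)
  : chain (Obj B) (nerve_raw B 1 m) k :=
  Chain (fun v => nob x v) (fun i => nerve_face i x).

Definition segal1_target (B : bicat_data) (k m : nat)
  (c : chain (Obj B) (nerve_raw B 1 m) k) : Prop :=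
  in_pullback (fun _ => True) (@is_nerve B 1 m)
    (@src_obj B m) (@tgt_obj B m) c.

(* face maps s = A(id,sigma), t = A(id,tau) in the simplicial direction *)
Definition sface (B : bicat_data) (j : nat) (x : nerve_raw B j 1) :=
  nerve_pt ord0 x.
Definition tface (B : bicat_data) (j : nat) (x : nerve_raw B j 1) :=
  nerve_pt ord_max x.

Definition chain_map (V E E' : Type) (k : nat) (g : E -> E')
  (c : chain V E k) : chain V E' k := Chain (cvert c) (fun i => g (cedge c i)).

Definition segal_cond_i (B : bicat_data) (k : nat) : Prop :=
  contractible
    (@is_nerve B k 0) (@is_nerve B k 1)
    (@segal1_target B k 0) (@segal1_target B k 1)
    (@sface B k) (@tface B k)
    (chain_map (@sface B 1)) (chain_map (@tface B 1))
    (@segal1 B k 0) (@segal1 B k 1).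

Definition segal2 (B : bicat_data) (j k : nat) (x : nerve_raw B j k)
  : chain (nerve_raw B j 0) (nerve_raw B j 1) k :=
  Chain (fun v => nerve_pt v x) (fun i => nerve_edge i x).

Definition segal_cond_ii (B : bicat_data) (j k : nat) : Prop :=
  bijective_on (@is_nerve B j k)
    (in_pullback (@is_nerve B j 0) (@is_nerve B j 1) (@sface B j) (@tface B j))
    (@segal2 B j k).

(* Main.v *)
Require Import Defs.
From mathcomp Require Import ssreflect ssrfun ssrbool eqtype ssrnat seq fintype.
From Stdlib Require Import FunctionalExtensionality ClassicalEpsilon Eqdep Lia.
From mathcomp Require Import zify.

Set Implicit Arguments.
Unset Strict Implicit.
Unset Printing Implicit Defensive.


Definition cpick (T : Type) (P : T -> Prop) (H : exists x, P x) : T :=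
  proj1_sig (constructive_indefinite_description P H).
Lemma cpickP (T : Type) (P : T -> Prop) (H : exists x, P x) : P (cpick H).
Proof. exact: proj2_sig (constructive_indefinite_description P H). Qed.

Definition pk1 (B : bicat_data) (a b : Obj B) (f : hom a b) :
  {a : Obj B & {b : Obj B & hom a b}} := existT _ a (existT _ b f).
Definition pk2 (B : bicat_data) (a b : Obj B) (f g : hom a b) (c : cell f g) :
  {a : Obj B & {b : Obj B & {f : hom a b & {g : hom a b & cell f g}}}} :=
  existT _ a (existT _ b (existT _ f (existT _ g c))).

Ltac sig_inv H :=
  repeat match type of H with
  | existT _ ?a _ = existT _ ?a _ => apply inj_pair2 in H
  | existT _ ?a _ = existT _ ?b _ =>
      let E := fresh "E" in
      have E := f_equal (@projT1 _ _) H; simpl in E;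
      first [subst b | subst a]
  end.


Lemma pk1_inj (B : bicat_data) (a b : Obj B) (f f' : hom a b) :
  pk1 f = pk1 f' -> f = f'.
Proof. rewrite /pk1 => H; sig_inv H; exact H. Qed.

Lemma pk2_inj (B : bicat_data) (a b : Obj B) (f g : hom a b) (c c' : cell f g) :
  pk2 c = pk2 c' -> c = c'.
Proof. rewrite /pk2 => H; sig_inv H; exact H. Qed.

Lemma pk2_pk1 (B : bicat_data) (a b : Obj B) (f g : hom a b) (c : cell f g)
  a' b' (f' g' : hom a' b') (c' : cell f' g') :
  pk2 c = pk2 c' -> pk1 f = pk1 f' /\ pk1 g = pk1 g'.
Proof. rewrite /pk2 => H; sig_inv H; subst; done. Qed.

Lemma pk2_vcomp (B : bicat_data) (a b : Obj B) (f g h : hom a b)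
  (c1 : cell g h) (c2 : cell f g) a' b' (f' g' h' : hom a' b')
  (c1' : cell g' h') (c2' : cell f' g') :
  pk2 c1 = pk2 c1' -> pk2 c2 = pk2 c2' -> pk2 (vcomp c1 c2) = pk2 (vcomp c1' c2').
Proof. rewrite /pk2 => H1 H2; sig_inv H2; subst; sig_inv H1; subst; done. Qed.

Lemma pk2_hcomp (B : bicat_data) (a b c : Obj B) (f f' : hom a b) (g g' : hom b c)
  (c1 : cell g g') (c2 : cell f f') a1 b1 c3 (f1 f1' : hom a1 b1) (g1 g1' : hom b1 c3)
  (c1' : cell g1 g1') (c2' : cell f1 f1') :
  pk2 c1 = pk2 c1' -> pk2 c2 = pk2 c2' -> pk2 (hcomp c1 c2) = pk2 (hcomp c1' c2').
Proof. rewrite /pk2 => H1 H2; sig_inv H2; subst; sig_inv H1; subst; done. Qed.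

Lemma pk1_comp1 (B : bicat_data) (a b c : Obj B) (f : hom a b) (g : hom b c)
  a' b' c' (f' : hom a' b') (g' : hom b' c') :
  pk1 g = pk1 g' -> pk1 f = pk1 f' -> pk1 (comp1 g f) = pk1 (comp1 g' f').
Proof. rewrite /pk1 => H1 H2; sig_inv H2; subst; sig_inv H1; subst; done. Qed.

Lemma pk2_id2 (B : bicat_data) (a b : Obj B) (f : hom a b) a' b' (f' : hom a' b') :
  pk1 f = pk1 f' -> pk2 (id2 f) = pk2 (id2 f').
Proof. rewrite /pk1 => H; sig_inv H; subst; done. Qed.

Lemma pk2_assoc (B : bicat_data) (a b c d : Obj B) (f : hom a b) (g : hom b c) (h : hom c d)
  a' b' c' d' (f' : hom a' b') (g' : hom b' c') (h' : hom c' d') :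
  pk1 f = pk1 f' -> pk1 g = pk1 g' -> pk1 h = pk1 h' ->
  pk2 (assoc f g h) = pk2 (assoc f' g' h').
Proof.
rewrite /pk1 => H1 H2 H3; sig_inv H1; subst; sig_inv H2; subst; sig_inv H3; subst; done.
Qed.

Lemma ex_hom (B : bicat_data) (a b : Obj B) (f : hom a b) a' b' :
  a = a' -> b = b' -> exists f' : hom a' b', pk1 f' = pk1 f.
Proof. move=> E1 E2; subst; by exists f. Qed.

Lemma ex_cell (B : bicat_data) (a b : Obj B) (f g : hom a b) (c : cell f g)
  a' b' (f' g' : hom a' b') :
  pk1 f = pk1 f' -> pk1 g = pk1 g' -> exists c' : cell f' g', pk2 c' = pk2 c.
Proof. rewrite /pk1 => H1 H2; sig_inv H1; subst; sig_inv H2; subst; by exists c. Qed.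

Lemma pk2_inv (B : bicat_data) (a b : Obj B) (f g : hom a b) (c : cell f g)
  a' b' (f' g' : hom a' b') (c' : cell f' g') :
  pk2 c = pk2 c' -> invertible2 c -> invertible2 c'.
Proof. rewrite /pk2 => H; sig_inv H; subst; done. Qed.

Lemma nerve_eq (B : bicat_data) j k (x x' : nerve_raw B j k) :
  (forall u, nob x u = nob x' u) ->
  (forall (u v : 'I_j.+1) (h : u < v) z, pk1 (n1 x h z) = pk1 (n1 x' h z)) ->
  (forall (u v : 'I_j.+1) (h : u < v) z, pk2 (n2 x h z) = pk2 (n2 x' h z)) ->
  (forall (u v w : 'I_j.+1) (h1 : u < v) (h2 : v < w) (h3 : u < w) z,
      pk2 (n3 x h1 h2 h3 z) = pk2 (n3 x' h1 h2 h3 z)) -> x = x'.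
Proof.
case: x => o1 f1 a1 i1; case: x' => o2 f2 a2 i2 /= Ho H1 H2 H3.
have E := functional_extensionality _ _ Ho; subst o2.
have E : f1 = f2.
  by extensionality u; extensionality v; extensionality h; extensionality z;
     apply: pk1_inj; apply: H1.
subst f2.
have E : a1 = a2.
  by extensionality u; extensionality v; extensionality h; extensionality z;
     apply: pk2_inj; apply: H2.
subst a2.
have E : i1 = i2.
  by extensionality u; extensionality v; extensionality w; extensionality h1;
     extensionality h2; extensionality h3; extensionality z;
     apply: pk2_inj; apply: H3.
by subst i2.
Qed.

Lemma pk2E (B : bicat_data) (a b : Obj B) (f g : hom a b) (c c' : cell f g) :
  c = c' -> pk2 c = pk2 c'.
Proof. by move=> ->. Qed.

Lemma vA (B : bicategory) (a b : Obj B) (f g h i : hom a b)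
  (al : cell f g) (be : cell g h) (ga : cell h i) :
  vcomp ga (vcomp be al) = vcomp (vcomp ga be) al.
Proof. by case: (bicat_ax B) => H _; apply: H. Qed.
Lemma v1l (B : bicategory) (a b : Obj B) (f g : hom a b) (al : cell f g) :
  vcomp (id2 g) al = al.
Proof. by case: (bicat_ax B) => _ [H _]; case: (H _ _ _ _ al). Qed.
Lemma v1r (B : bicategory) (a b : Obj B) (f g : hom a b) (al : cell f g) :
  vcomp al (id2 f) = al.
Proof. by case: (bicat_ax B) => _ [H _]; case: (H _ _ _ _ al). Qed.
Lemma h11 (B : bicategory) (a b c : Obj B) (f : hom a b) (g : hom b c) :
  hcomp (id2 g) (id2 f) = id2 (comp1 g f).
Proof. by case: (bicat_ax B) => _ [_ [H _]]. Qed.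
Lemma hvv (B : bicategory) (a b c : Obj B) (f f' f'' : hom a b) (g g' g'' : hom b c)
  (al : cell f f') (al' : cell f' f'') (be : cell g g') (be' : cell g' g'') :
  hcomp (vcomp be' be) (vcomp al' al) = vcomp (hcomp be' al') (hcomp be al).
Proof. by case: (bicat_ax B) => _ [_ [_ [H _]]]. Qed.
Lemma assoc_invertible (B : bicategory) (a b c d : Obj B) (f : hom a b) (g : hom b c) (h : hom c d) :
  invertible2 (assoc f g h).
Proof. by case: (bicat_ax B) => _ [_ [_ [_ [H _]]]]. Qed.
Lemma assoc_nat (B : bicategory) (a b c d : Obj B) (f f' : hom a b) (g g' : hom b c) (h h' : hom c d)
  (al : cell f f') (be : cell g g') (ga : cell h h') :
  vcomp (assoc f' g' h') (hcomp (hcomp ga be) al)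
  = vcomp (hcomp ga (hcomp be al)) (assoc f g h).
Proof. by case: (bicat_ax B) => _ [_ [_ [_ [_ [_ [_ [H _]]]]]]]. Qed.
Lemma pentagon (B : bicategory) (a b c d e : Obj B) (f : hom a b) (g : hom b c) (h : hom c d) (k : hom d e) :
  vcomp (assoc (comp1 g f) h k) (assoc f g (comp1 k h))
  = vcomp (hcomp (id2 k) (assoc f g h))
      (vcomp (assoc f (comp1 h g) k) (hcomp (assoc g h k) (id2 f))).
Proof. by case: (bicat_ax B) => _ [_ [_ [_ [_ [_ [_ [_ [_ [_ [H _]]]]]]]]]]. Qed.

Definition inv2 (B : bicat_data) (a b : Obj B) (f g : hom a b) (c : cell f g)
  (H : invertible2 c) : cell g f := cpick H.
Lemma inv2K (B : bicat_data) (a b : Obj B) (f g : hom a b) (c : cell f g)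
  (H : invertible2 c) : vcomp (inv2 H) c = id2 f /\ vcomp c (inv2 H) = id2 g.
Proof. exact: cpickP H. Qed.

Lemma id2_invertible (B : bicategory) (a b : Obj B) (f : hom a b) : invertible2 (id2 f).
Proof. by exists (id2 f); rewrite v1l. Qed.

Lemma vcomp_invertible (B : bicategory) (a b : Obj B) (f g h : hom a b)
  (c1 : cell g h) (c2 : cell f g) :
  invertible2 c1 -> invertible2 c2 -> invertible2 (vcomp c1 c2).
Proof.
move=> [d1 [e1 e1']] [d2 [e2 e2']]; exists (vcomp d2 d1); split.
  by rewrite vA -[vcomp (vcomp d2 d1) c1]vA e1 v1r.
by rewrite vA -[vcomp (vcomp c1 c2) d2]vA e2' v1r.
Qed.

Lemma hcomp_invertible (B : bicategory) (a b c : Obj B) (f f' : hom a b) (g g' : hom b c)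
  (c1 : cell g g') (c2 : cell f f') :
  invertible2 c1 -> invertible2 c2 -> invertible2 (hcomp c1 c2).
Proof.
move=> [d1 [e1 e1']] [d2 [e2 e2']]; exists (hcomp d1 d2); split.
  by rewrite -hvv e1 e2 h11.
by rewrite -hvv e1' e2' h11.
Qed.

Lemma hid_v (B : bicategory) (a b c : Obj B) (f f' f'' : hom a b) (g : hom b c)
  (al : cell f f') (al' : cell f' f'') :
  hcomp (id2 g) (vcomp al' al) = vcomp (hcomp (id2 g) al') (hcomp (id2 g) al).
Proof. by rewrite -hvv v1l. Qed.
Lemma v_hid (B : bicategory) (a b c : Obj B) (f : hom a b) (g g' g'' : hom b c)
  (be : cell g g') (be' : cell g' g'') :
  hcomp (vcomp be' be) (id2 f) = vcomp (hcomp be' (id2 f)) (hcomp be (id2 f)).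
Proof. by rewrite -hvv v1l. Qed.

Lemma I1_eq (z : 'I_1) : z = ord0.
Proof. by apply: val_inj; case: z => [[|n] hn]. Qed.
Lemma zprev0 : (zprev (ord0 : 'I_1)) = (ord0 : 'I_2).
Proof. exact: val_inj. Qed.
Lemma znext0 : (znext (ord0 : 'I_1)) = (ord_max : 'I_2).
Proof. exact: val_inj. Qed.
Lemma I0_absurd (P : Type) (z : 'I_0) : P.
Proof. by case: z. Qed.

Lemma seg2_vert (B : bicat_data) j k (x : nerve_raw B j k) (z : 'I_k.+1) :
  is_nerve x -> is_nerve (nerve_pt z x).
Proof.
move=> [Hi [H1 H2]]; split; last split.
- by move=> u v w huv hvw huw z0; apply: Hi.
- by move=> u v w huv hvw huw; case.
- by move=> *; apply: H2.
Qed.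

Lemma seg2_edge (B : bicat_data) j k (x : nerve_raw B j k) (i : 'I_k) :
  is_nerve x -> is_nerve (nerve_edge i x).
Proof.
move=> [Hi [H1 H2]]; split; last split.
- by move=> u v w huv hvw huw z0; apply: Hi.
- move=> u v w huv hvw huw [[|n] hz] //=; exact: H1.
- by move=> *; apply: H2.
Qed.

Lemma seg2_s (B : bicat_data) j k (x : nerve_raw B j k) (i : 'I_k) :
  sface (nerve_edge i x) = nerve_pt (zprev i) x.
Proof. by apply: nerve_eq => //= u v h; case. Qed.
Lemma seg2_t (B : bicat_data) j k (x : nerve_raw B j k) (i : 'I_k) :
  tface (nerve_edge i x) = nerve_pt (znext i) x.
Proof. by apply: nerve_eq => //= u v h; case. Qed.

Lemma seg2_inj (B : bicat_data) j k (x1 x2 : nerve_raw B j k) :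
  segal2 x1 = segal2 x2 -> x1 = x2.
Proof.
rewrite /segal2 => H.
have Hv := f_equal cvert H; have He := f_equal cedge H; simpl in Hv, He.
have Hv' := fun z : 'I_k.+1 => f_equal (fun F => F z) Hv.
have He' := fun i : 'I_k => f_equal (fun F => F i) He.
simpl in Hv', He'.
apply: nerve_eq.
- by move=> u; have := f_equal (fun y => nob y u) (Hv' ord0).
- by move=> u v h z; have := f_equal (fun y => pk1 (n1 y h ord0)) (Hv' z).
- by move=> u v h z; have := f_equal (fun y => pk2 (n2 y h ord0)) (He' z).
- by move=> u v w h1 h2 h3 z; have := f_equal (fun y => pk2 (n3 y h1 h2 h3 ord0)) (Hv' z).
Qed.

Lemma seg2_sur (B : bicat_data) j k (c : chain (nerve_raw B j 0) (nerve_raw B j 1) k) :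
  in_pullback (@is_nerve B j 0) (@is_nerve B j 1) (@sface B j) (@tface B j) c ->
  exists x, is_nerve x /\ segal2 x = c.
Proof.
case: c => V E [HV HE] /=; simpl in HV, HE.
pose a := nob (V ord0).
have Hob : forall z, nob (V z) = a.
  suff H : forall n (hn : n < k.+1), nob (V (Ordinal hn)) = a.
    by case=> n hn; apply: H.
  elim=> [|n IH] hn; first by rewrite (_ : Ordinal hn = ord0) //; apply: val_inj.
  have hk : n < k := hn.
  have [_ [Hs Ht]] := HE (Ordinal hk).
  rewrite (_ : Ordinal hn = znext (Ordinal hk)); last by apply: val_inj.
  rewrite -Ht /= -(IH (ltnW hn)).
  have -> : Ordinal (ltnW hn) = zprev (Ordinal hk) by apply: val_inj.
  by rewrite -Hs.
have exX1 : forall (u v : 'I_j.+1) (h : u < v) (z : 'I_k.+1),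
    exists f : hom (a u) (a v), pk1 f = pk1 (n1 (V z) h ord0).
  by move=> u v h z; apply: ex_hom; rewrite Hob.
pose X1 : forall (u v : 'I_j.+1), u < v -> 'I_k.+1 -> hom (a u) (a v) :=
  fun u v h z => cpick (exX1 u v h z).
have X1P : forall u v h z, pk1 (X1 u v h z) = pk1 (n1 (V z) h ord0) :=
  fun u v h z => cpickP (exX1 u v h z).
have L1 : forall i (u v : 'I_j.+1) (h : u < v), pk1 (n1 (E i) h ord0) = pk1 (X1 u v h (zprev i)).
  by move=> i u v h; rewrite X1P; have [_ [Hs _]] := HE i; rewrite -Hs.
have L2 : forall i (u v : 'I_j.+1) (h : u < v), pk1 (n1 (E i) h ord_max) = pk1 (X1 u v h (znext i)).
  by move=> i u v h; rewrite X1P; have [_ [_ Ht]] := HE i; rewrite -Ht.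
have exX2 : forall (u v : 'I_j.+1) (h : u < v) (i : 'I_k),
    exists c : cell (X1 u v h (zprev i)) (X1 u v h (znext i)),
      pk2 c = pk2 (n2 (E i) h ord0).
  move=> u v h i; apply: ex_cell; first by rewrite zprev0; apply: L1.
  by rewrite znext0; apply: L2.
pose X2 : forall (u v : 'I_j.+1) (h : u < v) (i : 'I_k),
    cell (X1 u v h (zprev i)) (X1 u v h (znext i)) :=
  fun u v h i => cpick (exX2 u v h i).
have X2P : forall u v h i, pk2 (X2 u v h i) = pk2 (n2 (E i) h ord0) :=
  fun u v h i => cpickP (exX2 u v h i).
have exX3 : forall (u v w : 'I_j.+1) (h1 : u < v) (h2 : v < w) (h3 : u < w) (z : 'I_k.+1),
    exists c : cell (comp1 (X1 v w h2 z) (X1 u v h1 z)) (X1 u w h3 z),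
      pk2 c = pk2 (n3 (V z) h1 h2 h3 ord0).
  move=> u v w h1 h2 h3 z; apply: ex_cell; last by rewrite X1P.
  by apply: pk1_comp1; rewrite X1P.
pose X3 : forall (u v w : 'I_j.+1) (h1 : u < v) (h2 : v < w) (h3 : u < w) (z : 'I_k.+1),
    cell (comp1 (X1 v w h2 z) (X1 u v h1 z)) (X1 u w h3 z) :=
  fun u v w h1 h2 h3 z => cpick (exX3 u v w h1 h2 h3 z).
have X3P : forall u v w h1 h2 h3 z, pk2 (X3 u v w h1 h2 h3 z) = pk2 (n3 (V z) h1 h2 h3 ord0) :=
  fun u v w h1 h2 h3 z => cpickP (exX3 u v w h1 h2 h3 z).
have L3 : forall i (u v w : 'I_j.+1) (h1 : u < v) (h2 : v < w) (h3 : u < w),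
    pk2 (n3 (E i) h1 h2 h3 ord0) = pk2 (X3 u v w h1 h2 h3 (zprev i)).
  by move=> i u v w h1 h2 h3; rewrite X3P; have [_ [Hs _]] := HE i; rewrite -Hs.
have L4 : forall i (u v w : 'I_j.+1) (h1 : u < v) (h2 : v < w) (h3 : u < w),
    pk2 (n3 (E i) h1 h2 h3 ord_max) = pk2 (X3 u v w h1 h2 h3 (znext i)).
  by move=> i u v w h1 h2 h3; rewrite X3P; have [_ [_ Ht]] := HE i; rewrite -Ht.
exists (@NerveRaw B j k a X1 X2 X3); split.
  split; last split.
  - move=> u v w h1 h2 h3 z /=; apply: (pk2_inv (esym (X3P _ _ _ _ _ _ _))).
    by case: (HV z) => Hi _; apply: Hi.
  - move=> u v w h1 h2 h3 z /=; apply: pk2_inj.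
    have [[_ [HA _]] _] := HE z.
    have HA' := pk2E (HA u v w h1 h2 h3 ord0).
    apply: etrans (etrans _ HA') _.
      apply: pk2_vcomp; last apply: pk2_hcomp; rewrite ?X2P //.
      by rewrite znext0 L4.
    apply: pk2_vcomp; rewrite ?X2P //.
    by rewrite zprev0 L3.
  - move=> u v w y h1 h2 h3 h4 h5 h6 z /=; apply: pk2_inj.
    have [_ [_ HA]] := HV z.
    have HA' := pk2E (HA u v w y h1 h2 h3 h4 h5 h6 ord0).
    apply: etrans (etrans _ HA') _.
      apply: pk2_vcomp; first by rewrite X3P.
      apply: pk2_vcomp; last by apply: pk2_assoc; rewrite X1P.
      by apply: pk2_hcomp; [apply: pk2_id2; rewrite X1P | rewrite X3P].
    apply: pk2_vcomp; first by rewrite X3P.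
    by apply: pk2_hcomp; [rewrite X3P | apply: pk2_id2; rewrite X1P].
congr Chain; extensionality t.
  apply: nerve_eq => /=.
  - by move=> u; rewrite Hob.
  - by move=> u v h z; rewrite (I1_eq z) X1P.
  - by move=> u v h; case.
  - by move=> u v w h1 h2 h3 z; rewrite (I1_eq z) X3P.
have Hne : nob (E t) = a.
  by have [_ [Hs _]] := HE t; rewrite -(Hob (zprev t)) -Hs.
apply: nerve_eq => /=.
- by move=> u; rewrite Hne.
- move=> u v h [[|[|n]] hz] //.
    by rewrite (_ : Ordinal hz = ord0) ?L1 //; apply: val_inj.
  by rewrite (_ : Ordinal hz = ord_max) ?L2 //; apply: val_inj.
- move=> u v h [[|n] hz] //=.
  apply: etrans (X2P _ _ _ _) _.
  by rewrite (_ : Ordinal hz = ord0) //; apply: val_inj.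
- move=> u v w h1 h2 h3 [[|[|n]] hz] //.
    by rewrite (_ : Ordinal hz = ord0) ?L3 //; apply: val_inj.
  by rewrite (_ : Ordinal hz = ord_max) ?L4 //; apply: val_inj.
Qed.

Lemma segal_ii_proof (B : bicat_data) j k : segal_cond_ii B j k.
Proof.
split.
  move=> x Hx; split.
    by move=> z; apply: seg2_vert.
  move=> i /=; split; first exact: seg2_edge.
  by rewrite seg2_s seg2_t.
move=> c Hc; have [x [Hx Hs]] := seg2_sur Hc.
exists x; split => // x' [_ Hx']; apply: seg2_inj; by rewrite Hs Hx'.
Qed.

Fixpoint plr (u d : nat) : nat := match d with 0 => u | S d' => S (plr u d') end.
Lemma plrE u d : plr u d = u + d.
Proof. by elim: d => [|d IH] /=; rewrite ?addn0 ?addnS ?IH. Qed.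

Fixpoint Gc (B : bicategory) (a : nat -> Obj B) (g : forall n, hom (a n) (a n.+1))
  (u d : nat) {struct d} : hom (a u) (a (S (plr u d))) :=
  match d as d0 return hom (a u) (a (S (plr u d0))) with
  | 0 => g u
  | S d' => comp1 (g (S (plr u d'))) (Gc g u d')
  end.

Fixpoint Ext (B : bicategory) (a : nat -> Obj B) (g : forall n, hom (a n) (a n.+1))
  (u d e : nat) {struct e} : hom (a u) (a (S (plr (S (plr u d)) e))) :=
  match e as e0 return hom (a u) (a (S (plr (S (plr u d)) e0))) with
  | 0 => comp1 (g (S (plr u d))) (Gc g u d)
  | S e' => comp1 (g (S (plr (S (plr u d)) e'))) (Ext g u d e')
  end.

Fixpoint iot (B : bicategory) (a : nat -> Obj B) (g : forall n, hom (a n) (a n.+1))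
  (u d e : nat) {struct e} : cell (comp1 (Gc g (S (plr u d)) e) (Gc g u d)) (Ext g u d e) :=
  match e as e0 return cell (comp1 (Gc g (S (plr u d)) e0) (Gc g u d)) (Ext g u d e0) with
  | 0 => id2 _
  | S e' => vcomp (hcomp (id2 (g (S (plr (S (plr u d)) e')))) (iot g u d e'))
                  (assoc (Gc g u d) (Gc g (S (plr u d)) e') (g (S (plr (S (plr u d)) e'))))
  end.

Lemma pk1_g (B : bicategory) (a : nat -> Obj B) (g : forall n, hom (a n) (a n.+1)) n n' :
  n = n' -> pk1 (g n) = pk1 (g n').
Proof. by move->. Qed.
Lemma pk1_Gc (B : bicategory) (a : nat -> Obj B) (g : forall n, hom (a n) (a n.+1)) u u' d d' :
  u = u' -> d = d' -> pk1 (Gc g u d) = pk1 (Gc g u' d').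
Proof. by move=> -> ->. Qed.

Lemma Ext_G (B : bicategory) (a : nat -> Obj B) (g : forall n, hom (a n) (a n.+1)) u d e :
  pk1 (Ext g u d e) = pk1 (Gc g u (S (d + e))).
Proof.
elim: e => [|e IH] /=; first by rewrite addn0.
rewrite addnS; apply: pk1_comp1; last exact: IH.
apply: pk1_g.
rewrite !plrE; lia.
Qed.

Lemma exF (B : bicategory) (a : nat -> Obj B) (g : forall n, hom (a n) (a n.+1)) u v :
  u < v -> exists f : hom (a u) (a v), pk1 f = pk1 (Gc g u (v - u.+1)).
Proof.
move=> h; apply: ex_hom => //; rewrite plrE; congr a; lia.
Qed.

Definition Fe (B : bicategory) (a : nat -> Obj B) (g : forall n, hom (a n) (a n.+1)) u v
  (h : u < v) : hom (a u) (a v) := cpick (exF g h).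
Lemma FeP (B : bicategory) (a : nat -> Obj B) (g : forall n, hom (a n) (a n.+1)) u v
  (h : u < v) : pk1 (Fe g h) = pk1 (Gc g u (v - u.+1)).
Proof. exact: (cpickP (exF g h)). Qed.

Lemma exI (B : bicategory) (a : nat -> Obj B) (g : forall n, hom (a n) (a n.+1)) u v w
  (h1 : u < v) (h2 : v < w) (h3 : u < w) :
  exists c : cell (comp1 (Fe g h2) (Fe g h1)) (Fe g h3),
    pk2 c = pk2 (iot g u (v - u.+1) (w - v.+1)).
Proof.
apply: (ex_cell (iot g u (v - u.+1) (w - v.+1))).
  apply: pk1_comp1; rewrite FeP //; apply: pk1_Gc => //.
  rewrite plrE; lia.
rewrite Ext_G FeP; apply: pk1_Gc => //; lia.
Qed.

Definition Ie (B : bicategory) (a : nat -> Obj B) (g : forall n, hom (a n) (a n.+1)) u v w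
  (h1 : u < v) (h2 : v < w) (h3 : u < w) : cell (comp1 (Fe g h2) (Fe g h1)) (Fe g h3) :=
  cpick (exI g h1 h2 h3).
Lemma IeP (B : bicategory) (a : nat -> Obj B) (g : forall n, hom (a n) (a n.+1)) u v w
  (h1 : u < v) (h2 : v < w) (h3 : u < w) :
  pk2 (Ie g h1 h2 h3) = pk2 (iot g u (v - u.+1) (w - v.+1)).
Proof. exact: (cpickP (exI g h1 h2 h3)). Qed.

Lemma F_adj (B : bicategory) (a : nat -> Obj B) (g : forall n, hom (a n) (a n.+1)) n
  (h : n < n.+1) : pk1 (Fe g h) = pk1 (g n).
Proof. by rewrite FeP subnn. Qed.

Lemma EF (B : bicategory) (a : nat -> Obj B) (g : forall n, hom (a n) (a n.+1)) u w
  (h : u < w.+1) (h1 : w < w.+1) (h2 : u < w) :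
  Fe g h = comp1 (Fe g h1) (Fe g h2).
Proof.
apply: pk1_inj; rewrite FeP.
have -> : w.+1 - u.+1 = (w - u.+1).+1 by lia.
apply: pk1_comp1; last by rewrite FeP.
rewrite F_adj; apply: pk1_g; rewrite plrE; lia.
Qed.

Lemma I0 (B : bicategory) (a : nat -> Obj B) (g : forall n, hom (a n) (a n.+1)) u w
  (h1 : u < w) (h2 : w < w.+1) (h3 : u < w.+1) :
  pk2 (Ie g h1 h2 h3) = pk2 (id2 (comp1 (Fe g h2) (Fe g h1))).
Proof.
rewrite IeP subnn /=; apply: pk2_id2; apply: pk1_comp1; last by rewrite FeP.
rewrite F_adj; apply: pk1_g; rewrite plrE; lia.
Qed.

Lemma IS (B : bicategory) (a : nat -> Obj B) (g : forall n, hom (a n) (a n.+1)) u v w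
  (h1 : u < v) (h2 : v < w.+1) (h3 : u < w.+1) (h4 : w < w.+1) (h5 : v < w) (h6 : u < w) :
  pk2 (Ie g h1 h2 h3) =
  pk2 (vcomp (hcomp (id2 (Fe g h4)) (Ie g h1 h5 h6)) (assoc (Fe g h1) (Fe g h5) (Fe g h4))).
Proof.
rewrite IeP.
have -> : w.+1 - v.+1 = (w - v.+1).+1 by lia.
rewrite /=; apply: pk2_vcomp.
  apply: pk2_hcomp; last by rewrite IeP.
  apply: pk2_id2; rewrite F_adj; apply: pk1_g; rewrite !plrE; lia.
apply: pk2_assoc.
- by rewrite FeP.
- rewrite FeP; apply: pk1_Gc => //; rewrite plrE; lia.
- rewrite F_adj; apply: pk1_g; rewrite !plrE; lia.
Qed.

Lemma coh_base (B : bicategory) (a b c d : Obj B) (f : hom a b) (g : hom b c) (k : hom c d)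
  (Fuw : hom a c) (Iuvw : cell (comp1 g f) Fuw) :
  vcomp (id2 (comp1 k Fuw)) (vcomp (hcomp (id2 k) Iuvw) (assoc f g k))
  = vcomp (vcomp (hcomp (id2 k) Iuvw) (assoc f g k)) (hcomp (id2 (comp1 k g)) (id2 f)).
Proof. by rewrite v1l h11 v1r. Qed.

Lemma coh_step (B : bicategory) (a b c d e : Obj B) (f : hom a b) (g : hom b c)
  (h : hom c d) (k : hom d e) (Fuw : hom a c) (Fvy : hom b d) (Fuy : hom a d)
  (Iuvw : cell (comp1 g f) Fuw) (Ivwy : cell (comp1 h g) Fvy)
  (Iuwy : cell (comp1 h Fuw) Fuy) (Iuvy : cell (comp1 Fvy f) Fuy) :
  vcomp Iuwy (vcomp (hcomp (id2 h) Iuvw) (assoc f g h)) = vcomp Iuvy (hcomp Ivwy (id2 f)) ->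
  vcomp (vcomp (hcomp (id2 k) Iuwy) (assoc Fuw h k))
        (vcomp (hcomp (id2 (comp1 k h)) Iuvw) (assoc f g (comp1 k h)))
  = vcomp (vcomp (hcomp (id2 k) Iuvy) (assoc f Fvy k))
          (hcomp (vcomp (hcomp (id2 k) Ivwy) (assoc g h k)) (id2 f)).
Proof.
move=> IH.
have N1 := assoc_nat Iuvw (id2 h) (id2 k).
rewrite h11 in N1.
have N2 := assoc_nat (id2 f) Ivwy (id2 k).
have P := pentagon f g h k.
rewrite -!vA.
rewrite (vA (assoc f g (comp1 k h))) N1 -!vA.
rewrite P.
rewrite (vA _ (hcomp (id2 k) (assoc f g h)) (hcomp (id2 k) (hcomp (id2 h) Iuvw))) -hid_v.
rewrite (vA _ (hcomp (id2 k) (vcomp (hcomp (id2 h) Iuvw) (assoc f g h))) (hcomp (id2 k) Iuwy)) -hid_v.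
rewrite IH hid_v -vA; congr vcomp.
rewrite v_hid (vA (hcomp (assoc g h k) (id2 f)) _ (assoc f Fvy k)) N2 -vA; done.
Qed.



Lemma A2e (B : bicategory) (a : nat -> Obj B) (g : forall n, hom (a n) (a n.+1)) y :
  forall u v w (huv : u < v) (hvw : v < w) (hwy : w < y) (huw : u < w) (hvy : v < y)
    (huy : u < y),
  vcomp (Ie g huw hwy huy)
    (vcomp (hcomp (id2 (Fe g hwy)) (Ie g huv hvw huw)) (assoc (Fe g huv) (Fe g hvw) (Fe g hwy)))
  = vcomp (Ie g huv hvy huy) (hcomp (Ie g hvw hwy hvy) (id2 (Fe g huv))).
Proof.
elim: y => [|y IH] u v w huv hvw hwy huw hvy huy; first by [].
apply: pk2_inj.
have hk : y < y.+1 := ltnSn y.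
case: (ltngtP w y) => [Lw|Lw|Ew].
- have hwy' : w < y := Lw.
  have hvy' : v < y := ltn_trans hvw Lw.
  have huy' : u < y := ltn_trans huw Lw.
  have C := coh_step (Fe g hk) (IH u v w huv hvw hwy' huw hvy' huy').
  apply: etrans (etrans _ (pk2E C)) _.
    apply: pk2_vcomp; first exact: (IS g huw hwy huy hk hwy' huy').
    apply: pk2_vcomp.
      apply: pk2_hcomp => //; apply: pk2_id2; by rewrite (EF g hwy hk hwy').
    apply: pk2_assoc => //; by rewrite (EF g hwy hk hwy').
  apply: pk2_vcomp; first by rewrite (IS g huv hvy huy hk hvy' huy').
  apply: pk2_hcomp => //; by rewrite (IS g hvw hwy hvy hk hwy' hvy').
- exfalso; lia.
- subst y.
  have C := coh_base (Fe g hwy) (Ie g huv hvw huw).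
  apply: etrans (etrans _ (pk2E C)) _.
    by apply: pk2_vcomp => //; exact: (I0 g huw hwy huy).
  apply: pk2_vcomp; first by rewrite (IS g huv hvy huy hwy hvw huw).
  by apply: pk2_hcomp => //; rewrite (I0 g hvw hwy hvy).
Qed.

Lemma Ie_inv (B : bicategory) (a : nat -> Obj B) (g : forall n, hom (a n) (a n.+1)) w :
  forall u v (h1 : u < v) (h2 : v < w) (h3 : u < w), invertible2 (Ie g h1 h2 h3).
Proof.
elim: w => [|w IH] u v h1 h2 h3; first by [].
case: (ltngtP v w) => [Lv|Lv|Ev].
- apply: (pk2_inv (esym (IS g h1 h2 h3 (ltnSn w) Lv (ltn_trans h1 Lv)))).
  apply: vcomp_invertible; last exact: assoc_invertible.
  apply: hcomp_invertible; [exact: id2_invertible | exact: IH].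
- exfalso; lia.
- subst v; apply: (pk2_inv (esym (I0 g h1 h2 h3))); exact: id2_invertible.
Qed.

Definition lt01 : (ord0 : 'I_2) < (ord_max : 'I_2) := erefl true.

Lemma I2_cases (u v : 'I_2) : u < v -> u = ord0 /\ v = ord_max.
Proof. by case: u v => [[|[|u]] hu] [[|[|v]] hv] //= _; split; apply: val_inj. Qed.

Lemma seg1_fwd (B : bicat_data) k m (x : nerve_raw B k m) : segal1_target (segal1 x).
Proof.
split => // i; split; last by [].
split; last split.
- by move=> u v w h1 h2; case: (no_triple2 h1 h2).
- by move=> u v w h1 h2; case: (no_triple2 h1 h2).
- by move=> u v w y h1 h2; case: (no_triple2 h1 h2).
Qed.

Lemma F_adj' (B : bicategory) (a : nat -> Obj B) (g : forall n, hom (a n) (a n.+1)) u v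
  (h : u < v) : v = u.+1 -> pk1 (Fe g h) = pk1 (g u).
Proof. move=> E; subst v; exact: F_adj. Qed.

Lemma seg1_sur (B : bicategory) k (y : chain (Obj B) (nerve_raw B 1 0) k) :
  segal1_target y -> exists2 x, is_nerve x & segal1 x = y.
Proof.
case: y => A E [_ HE]; simpl in HE.
pose a := fun n => A (inord (minn n k)).
have aA : forall u : 'I_k.+1, a u = A u.
  move=> u; rewrite /a; have -> : minn u k = u by apply/minn_idPl; rewrite -ltnS.
  by rewrite inord_val.
have exg : forall n, exists f : hom (a n) (a n.+1),
    forall (h : n < k), pk1 f = pk1 (n1 (E (Ordinal h)) lt01 ord0).
  move=> n; have [hn|hn] : n < k \/ k <= n by case: ltnP; auto.
    have [_ [Hs Ht]] := HE (Ordinal hn).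
    have [f Hf] : exists f : hom (a n) (a n.+1),
        pk1 f = pk1 (n1 (E (Ordinal hn)) lt01 ord0).
      apply: ex_hom.
        by apply: (etrans Hs); rewrite -aA.
      by apply: (etrans Ht); rewrite -aA.
    by exists f => h; rewrite (bool_irrelevance h hn).
  have Ea : a n.+1 = a n by rewrite /a !(minn_idPr _) // leqW.
  by rewrite Ea; exists (id1 _) => h; exfalso; lia.
pose g := fun n => cpick (exg n).
have gP : forall n (h : n < k), pk1 (g n) = pk1 (n1 (E (Ordinal h)) lt01 ord0) :=
  fun n => cpickP (exg n).
exists (@NerveRaw B k 0 (fun u => a u) (fun u v h _ => Fe g h)
          (fun u v h (z : 'I_0) => I0_absurd _ z) (fun u v w h1 h2 h3 _ => Ie g h1 h2 h3)).
  split; last split.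
  - by move=> *; apply: Ie_inv.
  - by move=> u v w h1 h2 h3; case.
  - by move=> *; apply: A2e.
congr Chain; extensionality t; first exact: aA.
case: t HE => i hi HE; have [_ [Hs Ht]] := HE (Ordinal hi).
apply: nerve_eq => /=.
- move=> [[|[|w]] hw] //.
    rewrite (_ : Ordinal hw = ord0); last exact: val_inj.
    by rewrite aA; symmetry; exact: Hs.
  rewrite (_ : Ordinal hw = ord_max); last exact: val_inj.
  by rewrite aA; symmetry; exact: Ht.
- move=> u v h z; case: (I2_cases h) => Eu Ev; subst u v.
  rewrite (I1_eq z) F_adj' //; rewrite (bool_irrelevance h lt01); exact: gP.
- by move=> u v h; case.
- by move=> u v w h1 h2; case: (no_triple2 h1 h2).
Qed.

Record LD (B : bicat_data) (k : nat) := MkLD {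
  ldA : 'I_k.+1 -> Obj B;
  ldP : forall u v : 'I_k.+1, u < v -> hom (ldA u) (ldA v);
  ldQ : forall u v : 'I_k.+1, u < v -> hom (ldA u) (ldA v);
  ldPI : forall (u v w : 'I_k.+1) (h1 : u < v) (h2 : v < w) (h3 : u < w),
      cell (comp1 (ldP h2) (ldP h1)) (ldP h3);
  ldQI : forall (u v w : 'I_k.+1) (h1 : u < v) (h2 : v < w) (h3 : u < w),
      cell (comp1 (ldQ h2) (ldQ h1)) (ldQ h3);
  ldPIinv : forall (u v w : 'I_k.+1) (h1 : u < v) (h2 : v < w) (h3 : u < w),
      cell (ldP h3) (comp1 (ldP h2) (ldP h1));
  ldbase : forall (u v : 'I_k.+1) (h : u < v), nat_of_ord v = u.+1 -> cell (ldP h) (ldQ h)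
}.

Lemma mid_lt k (v : 'I_k.+1) u d : nat_of_ord v = (plr u d).+2 -> (plr u d).+1 < k.+1.
Proof. move=> e; have := ltn_ord v; rewrite e; lia. Qed.
Lemma mid_h1 u d : u < (plr u d).+1.
Proof. rewrite plrE; lia. Qed.
Lemma mid_h2 k (v : 'I_k.+1) u d : nat_of_ord v = (plr u d).+2 -> (plr u d).+1 < v.
Proof. by move=> ->. Qed.

Fixpoint al (B : bicat_data) k (D : LD B k) (d : nat) {struct d} :
  forall (u v : 'I_k.+1) (h : u < v), nat_of_ord v = (plr u d).+1 ->
    cell (ldP D h) (ldQ D h) :=
  match d as d0 return forall (u v : 'I_k.+1) (h : u < v), nat_of_ord v = (plr u d0).+1 ->
    cell (ldP D h) (ldQ D h) with
  | 0 => fun u v h e => ldbase D h e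
  | S d' => fun u v h e =>
      let w : 'I_k.+1 := Ordinal (mid_lt e) in
      let h1 : u < w := mid_h1 u d' in
      let h2 : w < v := mid_h2 e in
      vcomp (vcomp (ldQI D h1 h2 h) (hcomp (ldbase D h2 e) (@al B k D d' _ _ h1 (erefl _))))
            (ldPIinv D h1 h2 h)
  end.
Arguments al {B k} D d {u v} h e.

Lemma al_irr (B : bicat_data) k (D : LD B k) d d' (u v : 'I_k.+1) (h : u < v)
  (e : nat_of_ord v = (plr u d).+1) (e' : nat_of_ord v = (plr u d').+1) :
  al D d h e = al D d' h e'.
Proof.
have Ed : d = d' by move: e e'; rewrite !plrE => -> /eqP; rewrite eqSS eqn_add2l => /eqP.
subst d'; by rewrite (eq_irrelevance e e').
Qed.

Lemma alpha_ex (u v : nat) : u < v -> v = (plr u (v - u.+1)).+1.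
Proof. rewrite plrE; lia. Qed.

Definition alpha (B : bicat_data) k (D : LD B k) (u v : 'I_k.+1) (h : u < v) :
  cell (ldP D h) (ldQ D h) := al D (v - u.+1) h (alpha_ex h).

Lemma alpha_adj (B : bicat_data) k (D : LD B k) (u v : 'I_k.+1) (h : u < v)
  (e : nat_of_ord v = u.+1) : alpha D h = ldbase D h e.
Proof. by rewrite /alpha (al_irr D h _ (e : nat_of_ord v = (plr u 0).+1)). Qed.

Definition aexpr (B : bicat_data) k (D : LD B k) (u m w : 'I_k.+1) (h1 : u < m)
  (h2 : m < w) (h3 : u < w) : cell (ldP D h3) (ldQ D h3) :=
  vcomp (vcomp (ldQI D h1 h2 h3) (hcomp (alpha D h2) (alpha D h1))) (ldPIinv D h1 h2 h3).

Lemma aexpr_eq (B : bicat_data) k (D : LD B k) (u m m' w : 'I_k.+1) (h1 : u < m)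
  (h2 : m < w) (h1' : u < m') (h2' : m' < w) (h3 : u < w) :
  m = m' -> aexpr D h1 h2 h3 = aexpr D h1' h2' h3.
Proof. by move=> E; subst m'; rewrite (bool_irrelevance h1' h1) (bool_irrelevance h2' h2). Qed.

Lemma alpha_unfold (B : bicat_data) k (D : LD B k) (u m w : 'I_k.+1) (h1 : u < m)
  (h2 : m < w) (h3 : u < w) : nat_of_ord w = m.+1 ->
  alpha D h3 = aexpr D h1 h2 h3.
Proof.
move=> ew.
have e : nat_of_ord w = (plr u (m - u.+1).+1).+1.
  by rewrite ew /= -(alpha_ex h1).
rewrite /alpha (al_irr D h3 _ e) /=.
set mm := Ordinal (mid_lt e).
rewrite -(alpha_adj D (mid_h2 e : mm < w) e).
rewrite (al_irr D (mid_h1 u (m - u.+1) : u < mm) _ (alpha_ex (mid_h1 u (m - u.+1) : u < mm))).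
rewrite -/(alpha D (mid_h1 u (m - u.+1) : u < mm)) -/(aexpr D _ _ h3).
apply: aexpr_eq; apply: val_inj; rewrite /= -(alpha_ex h1) //.
Qed.

Lemma a1_step (B : bicategory) (a b c d : Obj B)
 (Puv : hom a b) (Pvm : hom b c) (Pmw : hom c d) (Pum : hom a c) (Pvw : hom b d) (Puw : hom a d)
 (Quv : hom a b) (Qvm : hom b c) (Qmw : hom c d) (Qum : hom a c) (Qvw : hom b d) (Quw : hom a d)
 (PIuvm : cell (comp1 Pvm Puv) Pum) (PIvmw : cell (comp1 Pmw Pvm) Pvw)
 (PIumw : cell (comp1 Pmw Pum) Puw) (PIuvw : cell (comp1 Pvw Puv) Puw)
 (QIuvm : cell (comp1 Qvm Quv) Qum) (QIvmw : cell (comp1 Qmw Qvm) Qvw)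
 (QIumw : cell (comp1 Qmw Qum) Quw) (QIuvw : cell (comp1 Qvw Quv) Quw)
 (inv : cell Pvw (comp1 Pmw Pvm))
 (auv : cell Puv Quv) (avm : cell Pvm Qvm) (amw : cell Pmw Qmw) (aum : cell Pum Qum)
 (avw : cell Pvw Qvw) (auw : cell Puw Quw) :
 vcomp PIumw (vcomp (hcomp (id2 Pmw) PIuvm) (assoc Puv Pvm Pmw))
   = vcomp PIuvw (hcomp PIvmw (id2 Puv)) ->
 vcomp QIumw (vcomp (hcomp (id2 Qmw) QIuvm) (assoc Quv Qvm Qmw))
   = vcomp QIuvw (hcomp QIvmw (id2 Quv)) ->
 vcomp QIuvm (hcomp avm auv) = vcomp aum PIuvm ->
 avw = vcomp (vcomp QIvmw (hcomp amw avm)) inv ->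
 vcomp auw PIumw = vcomp QIumw (hcomp amw aum) ->
 vcomp PIvmw inv = id2 Pvw ->
 vcomp QIuvw (hcomp avw auv) = vcomp auw PIuvw.
Proof.
move=> A2P A2Q IH Hvw Huw Hinv.
rewrite Hvw.
rewrite -{1}[auv]v1r hvv -{1}[auv]v1l hvv.

rewrite vA vA -A2Q -!vA.
rewrite (vA (hcomp inv (id2 Puv)) (hcomp (hcomp amw avm) auv) (assoc Quv Qvm Qmw)).
rewrite (assoc_nat auv avm amw) -!vA.
rewrite (vA _ (hcomp amw (hcomp avm auv)) (hcomp (id2 Qmw) QIuvm)) -hvv v1l IH.
rewrite -{1}[amw]v1r hvv -!vA.
rewrite (vA _ (hcomp amw aum) QIumw) -Huw -!vA.
rewrite (vA (hcomp inv (id2 Puv)) (assoc Puv Pvm Pmw) (hcomp (id2 Pmw) PIuvm)).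
rewrite (vA (hcomp inv (id2 Puv)) _ PIumw) A2P.
rewrite -!vA -hvv Hinv v1l h11 v1r.
done.
Qed.


Lemma alpha_PI (B : bicategory) k (D : LD B k)
  (HPinvL : forall (u v w : 'I_k.+1) (h1 : u < v) (h2 : v < w) (h3 : u < w),
      vcomp (ldPIinv D h1 h2 h3) (ldPI D h1 h2 h3) = id2 _)
  (u m w : 'I_k.+1) (h1 : u < m) (h2 : m < w) (h3 : u < w) : nat_of_ord w = m.+1 ->
  vcomp (alpha D h3) (ldPI D h1 h2 h3) = vcomp (ldQI D h1 h2 h3) (hcomp (alpha D h2) (alpha D h1)).
Proof.
by move=> ew; rewrite (alpha_unfold D h1 h2 h3 ew) /aexpr -vA HPinvL v1r.
Qed.

Lemma A1gen (B : bicategory) k (D : LD B k)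
  (HPinvL : forall (u v w : 'I_k.+1) (h1 : u < v) (h2 : v < w) (h3 : u < w),
      vcomp (ldPIinv D h1 h2 h3) (ldPI D h1 h2 h3) = id2 _)
  (HPinvR : forall (u v w : 'I_k.+1) (h1 : u < v) (h2 : v < w) (h3 : u < w),
      vcomp (ldPI D h1 h2 h3) (ldPIinv D h1 h2 h3) = id2 _)
  (HA2P : forall (u v w y : 'I_k.+1) (huv : u < v) (hvw : v < w) (hwy : w < y)
      (huw : u < w) (hvy : v < y) (huy : u < y),
      vcomp (ldPI D huw hwy huy)
        (vcomp (hcomp (id2 (ldP D hwy)) (ldPI D huv hvw huw))
           (assoc (ldP D huv) (ldP D hvw) (ldP D hwy)))
      = vcomp (ldPI D huv hvy huy) (hcomp (ldPI D hvw hwy hvy) (id2 (ldP D huv))))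
  (HA2Q : forall (u v w y : 'I_k.+1) (huv : u < v) (hvw : v < w) (hwy : w < y)
      (huw : u < w) (hvy : v < y) (huy : u < y),
      vcomp (ldQI D huw hwy huy)
        (vcomp (hcomp (id2 (ldQ D hwy)) (ldQI D huv hvw huw))
           (assoc (ldQ D huv) (ldQ D hvw) (ldQ D hwy)))
      = vcomp (ldQI D huv hvy huy) (hcomp (ldQI D hvw hwy hvy) (id2 (ldQ D huv))))
  (u v w : 'I_k.+1) (h1 : u < v) (h2 : v < w) (h3 : u < w) :
  vcomp (ldQI D h1 h2 h3) (hcomp (alpha D h2) (alpha D h1)) = vcomp (alpha D h3) (ldPI D h1 h2 h3).
Proof.
move: (erefl (nat_of_ord w)); move: {2}(nat_of_ord w) => n.
elim: n u v w h1 h2 h3 => [|n IH] u v w h1 h2 h3 ew.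
  by exfalso; move: h2; rewrite ew.
have hn : n < k.+1 by have := ltn_ord w; rewrite ew; lia.
pose m : 'I_k.+1 := Ordinal hn.
have hmw : m < w by rewrite /= ew.
have ewm : nat_of_ord w = m.+1 by rewrite ew.
case: (ltngtP v n) => [Lv|Lv|Ev].
- have hvm : v < m := Lv.
  have hum : u < m := ltn_trans h1 Lv.
  exact: (a1_step (HA2P u v m w h1 hvm hmw hum h2 h3) (HA2Q u v m w h1 hvm hmw hum h2 h3)
            (IH u v m h1 hvm hum (erefl _)) (alpha_unfold D hvm hmw h2 ewm)
            (alpha_PI HPinvL hum hmw h3 ewm) (HPinvR v m w hvm hmw h2)).
- by exfalso; move: h2; rewrite ew; lia.
- have Evm : v = m by apply: val_inj.
  subst v; symmetry; exact: (alpha_PI HPinvL h1 h2 h3 ewm).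
Qed.

Lemma alpha_uniq (B : bicategory) k (D : LD B k)
  (HPinvR : forall (u v w : 'I_k.+1) (h1 : u < v) (h2 : v < w) (h3 : u < w),
      vcomp (ldPI D h1 h2 h3) (ldPIinv D h1 h2 h3) = id2 _)
  (beta : forall (u v : 'I_k.+1) (h : u < v), cell (ldP D h) (ldQ D h)) :
  (forall (u v : 'I_k.+1) (h : u < v) (e : nat_of_ord v = u.+1), beta u v h = ldbase D h e) ->
  (forall (u v w : 'I_k.+1) (h1 : u < v) (h2 : v < w) (h3 : u < w),
     vcomp (ldQI D h1 h2 h3) (hcomp (beta _ _ h2) (beta _ _ h1))
     = vcomp (beta _ _ h3) (ldPI D h1 h2 h3)) ->
  forall (u v : 'I_k.+1) (h : u < v), beta u v h = alpha D h.
Proof.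
move=> Hb HA u v h.
move: (erefl (v - u.+1)); move: {2}(v - u.+1) => n.
elim: n u v h => [|n IH] u v h en.
  have e : nat_of_ord v = u.+1 by lia.
  by rewrite Hb (alpha_adj D h e).
have hn : v.-1 < k.+1 by have := ltn_ord v; lia.
pose m : 'I_k.+1 := Ordinal hn.
have hum : u < m by rewrite /=; lia.
have hmv : m < v by rewrite /=; lia.
have evm : nat_of_ord v = m.+1 by rewrite /=; lia.
have -> : beta u v h = vcomp (vcomp (ldQI D hum hmv h) (hcomp (beta _ _ hmv) (beta _ _ hum)))
                             (ldPIinv D hum hmv h).
  by rewrite HA -vA HPinvR v1r.
rewrite (Hb _ _ hmv evm) -(alpha_adj D hmv evm) (IH u m hum); last by rewrite /=; lia.
by rewrite (alpha_unfold D hum hmv h evm).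
Qed.

Definition LN1 (B : bicat_data) k (D : LD B k) (u v : 'I_k.+1) (h : u < v) (z : 'I_2) :
  hom (ldA D u) (ldA D v) :=
  if nat_of_ord z == 0 then ldP D h else ldQ D h.

Definition LN2 (B : bicat_data) k (D : LD B k) (u v : 'I_k.+1) (h : u < v) (z : 'I_1) :
  cell (LN1 D h (zprev z)) (LN1 D h (znext z)) :=
  match z as z0 return cell (LN1 D h (zprev z0)) (LN1 D h (znext z0)) with
  | Ordinal n hn =>
    match n as n0 return forall hn0 : n0 < 1,
        cell (LN1 D h (zprev (Ordinal hn0))) (LN1 D h (znext (Ordinal hn0))) with
    | 0 => fun _ => alpha D h
    | n'.+1 => fun hn0 => False_rect _ (notF (hn0 : n'.+1 < 1))
    end hn
  end.

Definition LN3 (B : bicat_data) k (D : LD B k) (u v w : 'I_k.+1) (h1 : u < v) (h2 : v < w)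
  (h3 : u < w) (z : 'I_2) : cell (comp1 (LN1 D h2 z) (LN1 D h1 z)) (LN1 D h3 z) :=
  match z as z0 return cell (comp1 (LN1 D h2 z0) (LN1 D h1 z0)) (LN1 D h3 z0) with
  | Ordinal n hn =>
    match n as n0 return forall hn0 : n0 < 2,
        cell (comp1 (LN1 D h2 (Ordinal hn0)) (LN1 D h1 (Ordinal hn0))) (LN1 D h3 (Ordinal hn0)) with
    | 0 => fun _ => ldPI D h1 h2 h3
    | n'.+1 => fun _ => ldQI D h1 h2 h3
    end hn
  end.

Definition liftN (B : bicat_data) k (D : LD B k) : nerve_raw B k 1 :=
  @NerveRaw B k 1 (ldA D) (@LN1 B k D) (@LN2 B k D) (@LN3 B k D).

Lemma adj_lt k (u v : 'I_k.+1) : nat_of_ord v = u.+1 -> nat_of_ord u < k.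
Proof. move=> e; have := ltn_ord v; rewrite e; lia. Qed.

Lemma seg1_lift (B : bicategory) k (x x' : nerve_raw B k 0)
  (y : chain (Obj B) (nerve_raw B 1 1) k) :
  is_nerve x -> is_nerve x' -> segal1_target y ->
  segal1 x = chain_map (@sface B 1) y -> segal1 x' = chain_map (@tface B 1) y ->
  exists! x1, is_nerve x1 /\ sface x1 = x /\ segal1 x1 = y /\ tface x1 = x'.
Proof.
move=> Hx Hx' Hy Hs Ht.
case: y Hy Hs Ht => V E [_ HE] Hs Ht; simpl in HE.
case: x Hx Hs => A X1 X2 X3 Hx Hs.
case: x' Hx' Ht => A' Y1 Y2 Y3 Hx' Ht.
have HV := f_equal cvert Hs; simpl in HV; subst V.
have EA : A' = A.
  by extensionality u; exact: (f_equal (fun F => F u) (f_equal cvert Ht)).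
subst A'.
have HsE := fun i : 'I_k => f_equal (fun F => F i) (f_equal cedge Hs).
have HtE := fun i : 'I_k => f_equal (fun F => F i) (f_equal cedge Ht).
simpl in HsE, HtE.
have key : forall (i : 'I_k) (u v : 'I_k.+1) (h : u < v), u = zprev i -> v = znext i ->
    exists c : cell (X1 u v h ord0) (Y1 u v h ord0), pk2 c = pk2 (n2 (E i) lt01 ord0).
  move=> i u v h Eu Ev; subst u v.
  apply: ex_cell.
    rewrite zprev0; have := f_equal (fun t => pk1 (n1 t lt01 ord0)) (HsE i).
    by rewrite /= => <-; rewrite (bool_irrelevance (iota_map_mono i lt01) h).
  rewrite znext0; have := f_equal (fun t => pk1 (n1 t lt01 ord0)) (HtE i).
  by rewrite /= => <-; rewrite (bool_irrelevance (iota_map_mono i lt01) h).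
have exbase : forall (u v : 'I_k.+1) (h : u < v) (e : nat_of_ord v = u.+1),
    exists c : cell (X1 u v h ord0) (Y1 u v h ord0),
      pk2 c = pk2 (n2 (E (Ordinal (adj_lt e))) lt01 ord0).
  by move=> u v h e; apply: key; apply: val_inj.
have Hxi : forall (u v w : 'I_k.+1) (h1 : u < v) (h2 : v < w) (h3 : u < w),
    invertible2 (X3 u v w h1 h2 h3 ord0).
  by case: Hx => Hi _ u v w h1 h2 h3; apply: Hi.
pose D := @MkLD B k A (fun u v h => X1 u v h ord0) (fun u v h => Y1 u v h ord0)
  (fun u v w h1 h2 h3 => X3 u v w h1 h2 h3 ord0) (fun u v w h1 h2 h3 => Y3 u v w h1 h2 h3 ord0)
  (fun u v w h1 h2 h3 => inv2 (Hxi u v w h1 h2 h3)) (fun u v h e => cpick (exbase u v h e)).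
have baseP : forall (u v : 'I_k.+1) (h : u < v) (e : nat_of_ord v = u.+1),
    pk2 (ldbase D h e) = pk2 (n2 (E (Ordinal (adj_lt e))) lt01 ord0).
  by move=> u v h e; exact: (cpickP (exbase u v h e)).
have HPL : forall (u v w : 'I_k.+1) (h1 : u < v) (h2 : v < w) (h3 : u < w),
    vcomp (ldPIinv D h1 h2 h3) (ldPI D h1 h2 h3) = id2 _.
  by move=> u v w h1 h2 h3; case: (inv2K (Hxi u v w h1 h2 h3)).
have HPR : forall (u v w : 'I_k.+1) (h1 : u < v) (h2 : v < w) (h3 : u < w),
    vcomp (ldPI D h1 h2 h3) (ldPIinv D h1 h2 h3) = id2 _.
  by move=> u v w h1 h2 h3; case: (inv2K (Hxi u v w h1 h2 h3)).
have HA2P : forall (u v w y : 'I_k.+1) (huv : u < v) (hvw : v < w) (hwy : w < y)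
      (huw : u < w) (hvy : v < y) (huy : u < y),
      vcomp (ldPI D huw hwy huy)
        (vcomp (hcomp (id2 (ldP D hwy)) (ldPI D huv hvw huw))
           (assoc (ldP D huv) (ldP D hvw) (ldP D hwy)))
      = vcomp (ldPI D huv hvy huy) (hcomp (ldPI D hvw hwy hvy) (id2 (ldP D huv))).
  by case: Hx => _ [_ H] *; apply: H.
have HA2Q : forall (u v w y : 'I_k.+1) (huv : u < v) (hvw : v < w) (hwy : w < y)
      (huw : u < w) (hvy : v < y) (huy : u < y),
      vcomp (ldQI D huw hwy huy)
        (vcomp (hcomp (id2 (ldQ D hwy)) (ldQI D huv hvw huw))
           (assoc (ldQ D huv) (ldQ D hvw) (ldQ D hwy)))
      = vcomp (ldQI D huv hvy huy) (hcomp (ldQI D hvw hwy hvy) (id2 (ldQ D huv))).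
  by case: Hx' => _ [_ H] *; apply: H.
have baseP' : forall (i : 'I_k) (u v : 'I_k.+1) (h : u < v) (e : nat_of_ord v = u.+1),
    u = zprev i -> pk2 (ldbase D h e) = pk2 (n2 (E i) lt01 ord0).
  move=> i u v h e Eu; rewrite baseP (_ : Ordinal (adj_lt e) = i) //.
  by apply: val_inj; rewrite /= Eu.
exists (liftN D); split.
  split; last split; last split.
  - split; last split.
    + move=> u v w h1 h2 h3 [[|[|n]] hz] //=; first exact: Hxi.
      by case: Hx' => Hi _; apply: Hi.
    + move=> u v w h1 h2 h3 [[|n] hz] //=.
      exact: (A1gen HPL HPR HA2P HA2Q).
    + move=> u v w y h1 h2 h3 h4 h5 h6 [[|[|n]] hz] //=; first exact: HA2P.
      exact: HA2Q.
  - apply: nerve_eq => //=.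
    + by move=> u v h z; rewrite (I1_eq z).
    + by move=> u v h; case.
    + by move=> u v w h1 h2 h3 z; rewrite (I1_eq z).
  - congr Chain; extensionality i.
    apply: nerve_eq => /=.
    + by move=> w; exact: (f_equal (fun t => nob t w) (HsE i)).
    + move=> u v h z; case: (I2_cases h) => Eu Ev; subst u v.
      case: z => [[|[|n]] hz] //.
        rewrite (_ : Ordinal hz = ord0); last exact: val_inj.
        exact: (f_equal (fun t => pk1 (n1 t h ord0)) (HsE i)).
      rewrite (_ : Ordinal hz = ord_max); last exact: val_inj.
      exact: (f_equal (fun t => pk1 (n1 t h ord0)) (HtE i)).
    + move=> u v h z; case: (I2_cases h) => Eu Ev; subst u v.
      case: z => [[|n] hz] //=.
      rewrite (alpha_adj D (iota_map_mono i h) (@erefl nat (nat_of_ord i).+1)).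
      rewrite (baseP' i) //.
      rewrite (_ : Ordinal hz = ord0); last exact: val_inj.
      by rewrite (bool_irrelevance h lt01).
    + by move=> u v w h1 h2; case: (no_triple2 h1 h2).
  - apply: nerve_eq => //=.
    + by move=> u v h z; rewrite (I1_eq z).
    + by move=> u v h; case.
    + by move=> u v w h1 h2 h3 z; rewrite (I1_eq z).
move=> x1' [Hn' [Hsf [Hseg Htf]]].
case: x1' Hn' Hsf Hseg Htf => o' N1' N2' N3' Hn' Hsf Hseg Htf.
have Eo : o' = A := f_equal nob Hsf.
subst o'.
have EN1 : N1' = @LN1 B k D.
  extensionality u; extensionality v; extensionality h; extensionality z.
  case: z => [[|[|n]] hz] //; apply: pk1_inj.
    rewrite (_ : Ordinal hz = ord0); last exact: val_inj.
    exact: (f_equal (fun t => pk1 (n1 t h ord0)) Hsf).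
  rewrite (_ : Ordinal hz = ord_max); last exact: val_inj.
  exact: (f_equal (fun t => pk1 (n1 t h ord0)) Htf).
subst N1'.
have EN3 : N3' = @LN3 B k D.
  extensionality u; extensionality v; extensionality w; extensionality h1.
  extensionality h2; extensionality h3; extensionality z.
  case: z => [[|[|n]] hz] //; apply: pk2_inj.
    rewrite (_ : Ordinal hz = ord0); last exact: val_inj.
    exact: (f_equal (fun t => pk2 (n3 t h1 h2 h3 ord0)) Hsf).
  rewrite (_ : Ordinal hz = ord_max); last exact: val_inj.
  exact: (f_equal (fun t => pk2 (n3 t h1 h2 h3 ord0)) Htf).
subst N3'.
have key2 : forall (i : 'I_k) (u v : 'I_k.+1) (h : u < v), u = zprev i -> v = znext i ->
    pk2 (N2' u v h ord0) = pk2 (n2 (E i) lt01 ord0).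
  move=> i u v h Eu Ev; subst u v.
  have := f_equal (fun t => pk2 (n2 t lt01 ord0))
    (f_equal (fun F => F i) (f_equal cedge Hseg)).
  by rewrite /= => <-; rewrite (bool_irrelevance (iota_map_mono i lt01) h).
have EN2 : N2' = @LN2 B k D.
  extensionality u; extensionality v; extensionality h; extensionality z.
  case: z => [[|n] hz] //.
  rewrite (bool_irrelevance hz (ltn0Sn 0)) /=.
  apply: (alpha_uniq HPR (beta := fun u v h => N2' u v h ord0)).
    move=> u' v' h' e; apply: pk2_inj.
    rewrite (baseP' (Ordinal (adj_lt e))) //; last exact: val_inj.
    by apply: key2; apply: val_inj.
  move=> u' v' w' h1 h2 h3; case: Hn' => _ [HA1 _].
  exact: (HA1 u' v' w' h1 h2 h3 ord0).
by subst N2'.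
Qed.

Unset Implicit Arguments.

Theorem mainTheorem17 (B : bicategory) :
  (forall k : nat, segal_cond_i B k) /\ (forall j k : nat, segal_cond_ii B j k).
Proof.
split.
- move=> k; split; [|split; [|split]].
  + by move=> x _; exact: seg1_fwd.
  + by move=> x _; exact: seg1_fwd.
  + by move=> y Hy; exact: seg1_sur.
  + by move=> x x' y Hx Hx' Hy Hs Ht; exact: seg1_lift.
- by move=> j k; exact: segal_ii_proof.
Qed.
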